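(* Let $p\ge1$, $q\ge0$, and for $i=1,\dots,r$ let $f_i:\mathbb{R}^p\times\mathbb{R}^q\to\mathbb{R}$ be permutation-invariant with respect to its first argument. Let $\bar S=\{(M,z)\in\mathcal{S}^p\times\mathbb{R}^q\mid f_i(\lambda(M),z)\le1,\ i=1,\dots,r\}$ and $S=\{(x,z)\in\mathbb{R}^p\times\mathbb{R}^q\mid f_i(x,z)\le1,\ i=1,\dots,r\}$. Then $$\mathrm{conv}(\bar S)=\{(M,z)\in\mathcal{S}^p\times\mathbb{R}^q\mid(\lambda(M),z)\in\mathrm{conv}(S)\}.$$
   Context: $\mathcal{S}^p$ is the space of real symmetric $p\times p$ matrices and $\lambda(M)\in\mathbb{R}^p$ is the vector of eigenvalues of $M$ in nonincreasing order. $f(x,z)$ is permutation-invariant with respect to $x$ if $f(Px,z)=f(x,z)$ for every permutation matrix $P$. *)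

(* Defs.v *)
From HB Require Import structures.
From mathcomp Require Import all_boot all_order all_algebra all_fingroup.
From Stdlib Require Import ClassicalEpsilon.
Set Implicit Arguments. Unset Strict Implicit. Unset Printing Implicit Defensive.
Import Order.TTheory GRing.Theory Num.Theory.
Local Open Scope ring_scope.

(* This determines l uniquely when it exists. *)
Definition is_eigvec_sorted (R : rcfType) (p : nat) (M : 'M[R]_p) (l : 'rV[R]_p) : Prop :=
  char_poly M = \prod_(i < p) ('X - (l 0 i)%:P)
  /\ (forall i j : 'I_p, (i <= j)%N -> l 0 j <= l 0 i).

(* lambda(M): the nonincreasingly ordered eigenvalue vector (chosen by epsilon;
   for real symmetric M it exists and is unique). *)
Definition eigv (R : rcfType) (p : nat) (M : 'M[R]_p) : 'rV[R]_p :=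
  epsilon (inhabits 0) (fun l => is_eigvec_sorted M l).

Definition conv (R : realFieldType) (V : lmodType R) (A : V -> Prop) (v : V) : Prop :=
  exists (n : nat) (w : 'I_n -> R) (a : 'I_n -> V),
    (forall k, 0 <= w k) /\ \sum_(k < n) w k = 1 /\ (forall k, A (a k))
    /\ v = \sum_(k < n) w k *: a k.

Definition Sbar (R : rcfType) (p q r : nat) (f : 'I_r -> 'rV[R]_p -> 'rV[R]_q -> R)
  (P : 'M[R]_p * 'rV[R]_q) : Prop :=
  P.1^T = P.1 /\ forall i, f i (eigv P.1) P.2 <= 1.

Definition Sset (R : rcfType) (p q r : nat) (f : 'I_r -> 'rV[R]_p -> 'rV[R]_q -> R)
  (P : 'rV[R]_p * 'rV[R]_q) : Prop :=
  forall i, f i P.1 P.2 <= 1.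

(* Main.v *)
Require Import Defs.
From HB Require Import structures.
From mathcomp Require Import all_boot all_order all_algebra all_fingroup.
From mathcomp Require Import zify.
From mathcomp Require Import ring lra.
From mathcomp Require Import complex.
From Stdlib Require Import ClassicalEpsilon.
Import Order.TTheory GRing.Theory Num.Theory.
Set Implicit Arguments. Unset Strict Implicit. Unset Printing Implicit Defensive.
Local Open Scope ring_scope.

Lemma conv_fin (R : realFieldType) (V : lmodType R) (A : V -> Prop)
  (I : finType) (w : I -> R) (a : I -> V) :
  (forall i, 0 <= w i) -> \sum_i w i = 1 -> (forall i, A (a i)) ->
  conv A (\sum_i w i *: a i).
Proof.
move=> w0 w1 aA; exists #|I|, (fun k => w (enum_val k)), (fun k => a (enum_val k)).
split=> //; split; first by rewrite -(big_enum_val (fun i => w i)).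
split=> //; by rewrite -(big_enum_val (fun i => w i *: a i)).
Qed.

Lemma fst_sum (R : pzRingType) (U V : lmodType R) (I : finType) (F : I -> (U * V)%type) :
  (\sum_i F i).1 = \sum_i (F i).1.
Proof. by apply: (big_morph fst) => //. Qed.
Lemma snd_sum (R : pzRingType) (U V : lmodType R) (I : finType) (F : I -> (U * V)%type) :
  (\sum_i F i).2 = \sum_i (F i).2.
Proof. by apply: (big_morph snd) => //. Qed.


Definition nbh (T U : finType) (rel : T -> U -> bool) (A : {set T}) : {set U} :=
  [set y | [exists x in A, rel x y]].

Lemma nbhU (T U : finType) (rel : T -> U -> bool) (A B : {set T}) :
  nbh rel (A :|: B) = nbh rel A :|: nbh rel B.
Proof.
apply/setP => y; rewrite !inE; apply/existsP/orP.
  by case=> x /andP[]; rewrite inE => /orP[] xA rxy; [left|right];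
     apply/existsP; exists x; rewrite xA.
by case=> /existsP[x /andP[xA rxy]]; exists x; rewrite inE xA ?orbT.
Qed.

Lemma nbhS (T U : finType) (rel : T -> U -> bool) (A B : {set T}) :
  A \subset B -> nbh rel A \subset nbh rel B.
Proof.
move=> AB; apply/subsetP => y; rewrite !inE => /existsP[x /andP[xA rxy]].
by apply/existsP; exists x; rewrite (subsetP AB) .
Qed.

Lemma hall_gen (T U : finType) (u0 : U) n : forall (rel : T -> U -> bool) (X : {set T}),
  (#|X| <= n)%N ->
  (forall A : {set T}, A \subset X -> (#|A| <= #|nbh rel A|)%N) ->
  exists g : T -> U, {in X &, injective g} /\ {in X, forall x, rel x (g x)}.
Proof.
elim: n => [|n IH] rel X.
  rewrite leqn0 cards_eq0 => /eqP -> _; exists (fun _ => u0).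
  by split => x; rewrite inE.
move=> Xn hX.
case: (boolP [exists A : {set T}, [&& A \subset X, A != set0, A != X &
                  (#|nbh rel A| <= #|A|)%N]]).
- case/existsP => A /and4P [AX A0 AX' NA].
  have cAX : (#|A| < #|X|)%N by rewrite proper_card // properEneq AX' AX.
  have [g1 [g1i g1r]] : exists g : T -> U, {in A &, injective g} /\ {in A, forall x, rel x (g x)}.
    apply: (IH rel A); first by rewrite -ltnS (leq_trans cAX).
    by move=> B BA; apply: hX; apply: subset_trans BA AX.
  pose rel' x y := rel x y && (y \notin nbh rel A).
  have [g2 [g2i g2r]] : exists g : T -> U, {in X :\: A &, injective g} /\
      {in X :\: A, forall x, rel' x (g x)}.
    apply: (IH rel' (X :\: A)).
      rewrite -ltnS; apply: leq_trans Xn; rewrite cardsD (setIidPr AX).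
      have : (0 < #|A|)%N by rewrite card_gt0.
      have : (#|A| <= #|X|)%N by apply: subset_leq_card.
      by move=> h1 h2; rewrite ltn_subrL h2 (leq_trans h2 h1).
    move=> B BXA.
    have BX : B \subset X by apply: subset_trans BXA (subsetDl _ _).
    have dAB : A :&: B = set0.
      apply/setP=> x; rewrite !inE; case xA: (x \in A) => //=; apply/negP => xB.
      by have := subsetP BXA x xB; rewrite inE xA.
    have h1 := hX (A :|: B) ltac:(by rewrite subUset AX BX).
    rewrite cardsU dAB cards0 subn0 nbhU in h1.
    have h2 : nbh rel B \subset nbh rel A :|: nbh rel' B.
      apply/subsetP => y; rewrite !inE => /existsP[x /andP[xB rxy]].
      case: (boolP [exists x in A, rel x y]) => //= nA.
      apply/existsP; exists x; rewrite xB /rel' rxy /= inE; exact: nA.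
    have h3 := subset_leq_card (setUS (nbh rel A) h2).
    rewrite setUA setUid in h3.
    have h4 := leq_card_setU (nbh rel A) (nbh rel' B).
    have := leq_trans h1 (leq_trans h3 h4); lia.
  exists (fun x => if x \in A then g1 x else g2 x); split.
    move=> x y xX yX /=.
    case: (boolP (x \in A)) => xA; case: (boolP (y \in A)) => yA.
    + by apply: g1i.
    + move=> e; have : g2 y \notin nbh rel A.
        by have /andP[] := g2r y ltac:(by rewrite inE yA yX).
      by rewrite -e inE; case/negP; apply/existsP; exists x; rewrite xA g1r.
    + move=> e; have : g2 x \notin nbh rel A.
        by have /andP[] := g2r x ltac:(by rewrite inE xA xX).
      by rewrite e inE; case/negP; apply/existsP; exists y; rewrite yA g1r.
    + by apply: g2i; rewrite inE ?xA ?yA.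
  move=> x xX /=; case: ifP => xA; first exact: g1r.
  by have /andP[] := g2r x ltac:(by rewrite inE xA xX).
- move/existsPn => hB.
  case: (set_0Vmem X) => [X0|[x0 x0X]].
    by exists (fun _ => u0); split => x; rewrite X0 inE.
  have : (0 < #|nbh rel [set x0]|)%N.
    by apply: leq_trans (hX _ _); rewrite ?cards1 // sub1set.
  rewrite card_gt0 => /set0Pn [y0]; rewrite inE => /existsP[x1 /andP[]].
  rewrite inE => /eqP -> rxy0.
  pose rel' x y := rel x y && (y != y0).
  have [g2 [g2i g2r]] : exists g : T -> U, {in X :\ x0 &, injective g} /\
      {in X :\ x0, forall x, rel' x (g x)}.
    apply: (IH rel' (X :\ x0)).
      by rewrite -ltnS; apply: leq_trans Xn; rewrite (cardsD1 x0 X) x0X.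
    move=> B BX.
    case: (set_0Vmem B) => [-> |[b bB]]; first by rewrite cards0.
    have BX' : B \subset X by apply: subset_trans BX (subsetDl _ _).
    have hb1 : (B != set0) by apply/set0Pn; exists b.
    have hb2 : (B != X).
      apply/eqP => BXe; move: (subsetP BX x0); rewrite BXe x0X !inE eqxx /=.
      by move/(_ isT).
    have := hB B; rewrite BX' hb1 hb2 /= -ltnNge => lt.
    have h2 : nbh rel B \subset y0 |: nbh rel' B.
      apply/subsetP => y; rewrite !inE => /existsP[x /andP[xB rxy]].
      case: (eqVneq y y0) => //= ny; apply/existsP; exists x.
      by rewrite xB /rel' rxy ny.
    have := leq_trans lt (subset_leq_card h2).
    have := (leq_card_setU [set y0] (nbh rel' B)).1; rewrite cards1; lia.
  exists (fun x => if x == x0 then y0 else g2 x); split.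
    move=> x y xX yX /=.
    case: (eqVneq x x0) => xx0; case: (eqVneq y x0) => yx0 //.
    + by rewrite xx0 yx0.
    + move=> e; have /andP[_] := g2r y ltac:(by rewrite !inE yx0 yX).
      by rewrite -e eqxx.
    + move=> e; have /andP[_] := g2r x ltac:(by rewrite !inE xx0 xX).
      by rewrite e eqxx.
    + by apply: g2i; rewrite !inE ?xx0 ?yx0.
  move=> x xX /=; case: (eqVneq x x0) => [->|xx0]; first exact: rxy0.
  by have /andP[] := g2r x ltac:(by rewrite !inE xx0 xX).
Qed.


Lemma fin_argmin (R : realDomainType) (I : finType) (i1 : I) (F : I -> R) :
  exists i0, forall i, F i0 <= F i.
Proof.
by case: (@arg_minP _ _ _ i1 predT F) => // i0 _ h; exists i0 => i; apply: h.
Qed.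

Definition suppc (R : realFieldType) n (D : 'M[R]_n) : {set 'I_n * 'I_n} :=
  [set ij | D ij.1 ij.2 != 0].

Lemma birkhoff_gen (R : realFieldType) n k : forall (D : 'M[R]_n) (c : R),
  (#|suppc D| <= k)%N ->
  (forall i j, 0 <= D i j) -> (forall i, \sum_j D i j = c) -> (forall j, \sum_i D i j = c) ->
  exists mu : 'S_n -> R, (forall s, 0 <= mu s) /\
     (forall i j, D i j = \sum_s mu s * ((s i == j)%:R)).
Proof.
elim: k => [|k IH] D c.
- rewrite leqn0 cards_eq0 => /eqP s0 _ _ _; exists (fun _ => 0); split=> // i j.
  rewrite big1 => [|t _]; last by rewrite mul0r.
  apply/eqP/negPn/negP => nz.
  have : (i, j) \in suppc D by rewrite inE.
  by rewrite s0 inE.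
move=> Dk D0 Dr Dc.
case: (boolP [exists ij : 'I_n * 'I_n, D ij.1 ij.2 != 0]); last first.
  move/existsPn => z; exists (fun _ => 0); split=> // i j.
  rewrite big1 => [|t _]; last by rewrite mul0r.
  by have /negPn/eqP := z (i, j).
case/existsP => -[i1 j1] /= nz1.
have Dpos1 : 0 < D i1 j1 by rewrite lt_def nz1 D0.
have cpos : 0 < c.
  rewrite -(Dr i1) (bigD1 j1) //=; apply: (lt_le_trans Dpos1); rewrite lerDl.
  by apply: sumr_ge0 => j _; apply: D0.
pose rel (i j : 'I_n) := 0 < D i j.
have hall : forall A : {set 'I_n}, A \subset setT -> (#|A| <= #|nbh rel A|)%N.
  move=> A _.
  have e1 : \sum_(i in A) \sum_j D i j = #|A|%:R * c.
    by rewrite (eq_bigr (fun _ => c)) ?sumr_const ?mulr_natl // => i _; apply: Dr.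
  have e2 : \sum_(i in A) \sum_j D i j = \sum_(i in A) \sum_(j in nbh rel A) D i j.
    apply: eq_bigr => i iA; rewrite (bigID (fun j => j \in nbh rel A)) /=.
    rewrite [X in _ + X]big1 ?addr0 // => j jN.
    apply/eqP; rewrite eq_le D0 andbT leNgt; apply/negP => pos.
    by move/negP: jN; apply; rewrite inE; apply/existsP; exists i; rewrite iA.
  have e3 : \sum_(i in A) \sum_(j in nbh rel A) D i j <= #|nbh rel A|%:R * c.
    rewrite exchange_big /=.
    rewrite -[X in _ <= X * c]sumr_const -[X in _ <= X * c]/(\sum_(j in nbh rel A) 1).
    rewrite mulr_suml; apply: ler_sum => j _; rewrite mul1r -(Dc j).
    rewrite [X in _ <= X](bigID (fun i => i \in A)) /= lerDl.
    by apply: sumr_ge0 => i _; apply: D0.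
  have : #|A|%:R * c <= #|nbh rel A|%:R * c by rewrite -e1 e2.
  by rewrite ler_pM2r // ler_nat.
have [g [gi gr]] := hall_gen i1 (leqnn #|[set: 'I_n]|) hall.
have ginj : injective g by move=> x y; apply: gi; rewrite inE.
pose s := perm ginj.
have spos : forall i, 0 < D i (s i) by move=> i; rewrite permE; apply: gr; rewrite inE.
have [i0 hmin] := fin_argmin i1 (fun i => D i (s i)).
pose m := D i0 (s i0).
pose D' := \matrix_(i, j) (D i j - m * (s i == j)%:R).
have D'0 : forall i j, 0 <= D' i j.
  move=> i j; rewrite mxE; case: eqP => [<-|_]; rewrite ?mulr1 ?subr_ge0 ?mulr0 ?subr0 //.
have colsum : forall j, \sum_i m * (s i == j)%:R = m.
  move=> j; rewrite (bigD1 (s^-1 j)%g) //= permKV eqxx mulr1 big1 ?addr0 // => i ne.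
  case: eqP => [e|]; rewrite ?mulr0 //; move: ne; by rewrite -e permK eqxx.
have rowsum : forall i, \sum_j m * (s i == j)%:R = m.
  move=> i; rewrite (bigD1 (s i)) //= eqxx mulr1 big1 ?addr0 // => j ne.
  by rewrite eq_sym (negbTE ne) mulr0.
have D'r : forall i, \sum_j D' i j = c - m.
  by move=> i; under eq_bigr do rewrite mxE; rewrite sumrB Dr rowsum.
have D'c : forall j, \sum_i D' i j = c - m.
  by move=> j; under eq_bigr do rewrite mxE; rewrite sumrB Dc colsum.
have supp : (#|suppc D'| <= k)%N.
  rewrite -ltnS; apply: leq_trans Dk; apply: proper_card; rewrite properEneq.
  apply/andP; split.
    apply/eqP => e; have : (i0, s i0) \in suppc D.
      by rewrite inE /= lt0r_neq0 ?spos.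
    by rewrite -e inE /= mxE eqxx mulr1 subrr eqxx.
  apply/subsetP => -[i j]; rewrite !inE /= mxE.
  case: (eqVneq (s i) j) => [<-|ne] h; [exact: lt0r_neq0 (spos i) | by rewrite mulr0 subr0 in h].
have [mu' [mu'0 hmu']] := IH D' (c - m) supp D'0 D'r D'c.
exists (fun t => mu' t + m * (t == s)%:R); split.
  move=> t; apply: addr_ge0 => //; apply: mulr_ge0; last by case: (t == s).
  exact: ltW (spos i0).
move=> i j; have := hmu' i j; rewrite mxE => e.
rewrite (eq_bigr (fun t => mu' t * (t i == j)%:R + m * (t == s)%:R * (t i == j)%:R));
  last by move=> t _; rewrite mulrDl.
rewrite big_split /= -e (bigD1 s) //= eqxx mulr1 big1 ?addr0; first by rewrite subrK.
by move=> t ts; rewrite (negbTE ts) mulr0 mul0r.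
Qed.

Lemma birkhoff (R : realFieldType) n (D : 'M[R]_n) (c : R) :
  (forall i j, 0 <= D i j) -> (forall i, \sum_j D i j = c) -> (forall j, \sum_i D i j = c) ->
  exists mu : 'S_n -> R, (forall s, 0 <= mu s) /\
     (forall i j, D i j = \sum_s mu s * ((s i == j)%:R)).
Proof. exact: (@birkhoff_gen R n _ D c (leqnn _)). Qed.


Lemma rv_dot_eq0 (R : realDomainType) n (u : 'rV[R]_n) : (u *m u^T) 0 0 = 0 -> u = 0.
Proof.
rewrite mxE => /eqP; rewrite psumr_eq0 => [/allP h|k _]; last first.
  by rewrite mxE -expr2 sqr_ge0.
apply/rowP => k; rewrite !mxE; have := h k (mem_index_enum _).
by rewrite mxE -expr2 sqrf_eq0 => /eqP.
Qed.

Lemma rv_dot_ge0 (R : realDomainType) n (u : 'rV[R]_n) : 0 <= (u *m u^T) 0 0.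
Proof. by rewrite mxE; apply: sumr_ge0 => k _; rewrite mxE -expr2 sqr_ge0. Qed.

Lemma mx11_tr (R : pzRingType) (M : 'M[R]_1) : M^T 0 0 = M 0 0.
Proof. by rewrite mxE. Qed.

Lemma ReD_c (R : rcfType) (x y : R[i]) : complex.Re (x + y) = complex.Re x + complex.Re y.
Proof. by case: x; case: y. Qed.
Lemma ImD_c (R : rcfType) (x y : R[i]) : complex.Im (x + y) = complex.Im x + complex.Im y.
Proof. by case: x; case: y. Qed.

Lemma sym_eigvec (R : rcfType) n (A : 'M[R]_n.+1) : A^T = A ->
  exists (a : R) (x : 'rV[R]_n.+1), x != 0 /\ x *m A = a *: x.
Proof.
move=> hA.
pose AC := map_mx (real_complex R) A.
have [a ea] := @Theorem7' R n.+1 AC (ltn0Sn n).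
case/eigenvalueP: ea => v hv vn0.
pose x := \row_k complex.Re (v 0 k).
pose y := \row_k complex.Im (v 0 k).
have ev k : \sum_j v 0 j * ((A j k)%:C)%C = a * v 0 k.
  have := congr1 (fun M : 'M[R[i]]_(1, n.+1) => M 0 k) hv; rewrite !mxE => <-.
  by apply: eq_bigr => j _; rewrite mxE.
have ReS (F : 'I_n.+1 -> R[i]) : complex.Re (\sum_j F j) = \sum_j complex.Re (F j).
  by apply: (big_morph _ (@ReD_c R)).
have ImS (F : 'I_n.+1 -> R[i]) : complex.Im (\sum_j F j) = \sum_j complex.Im (F j).
  by apply: (big_morph _ (@ImD_c R)).
have hx : x *m A = complex.Re a *: x - complex.Im a *: y.
  apply/rowP => k; rewrite !mxE.
  have := congr1 (@complex.Re R) (ev k); rewrite ReS => e.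
  rewrite (eq_bigr (fun j => complex.Re (v 0 j * ((A j k)%:C)%C))).
    by rewrite e; case: (a) (v 0 k) => [a1 a2] [b1 b2] /=.
  by move=> j _; rewrite mxE; case: (v 0 j) => [b1 b2] /=; rewrite mulr0 subr0.
have hy : y *m A = complex.Im a *: x + complex.Re a *: y.
  apply/rowP => k; rewrite !mxE.
  have := congr1 (@complex.Im R) (ev k); rewrite ImS => e.
  rewrite (eq_bigr (fun j => complex.Im (v 0 j * ((A j k)%:C)%C))).
    by rewrite e; case: (a) (v 0 k) => [a1 a2] [b1 b2] /=; rewrite addrC.
  by move=> j _; rewrite mxE; case: (v 0 j) => [b1 b2] /=; rewrite mulr0 add0r.
have t11 (M : 'M[R]_1) : M^T = M by rewrite [M]mx11_scalar tr_scalar_mx.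
have trs (u w : 'rV[R]_n.+1) (B : 'M[R]_n.+1) : B^T = B ->
    u *m B *m w^T = w *m B *m u^T.
  by move=> hB; rewrite -[RHS]t11 !trmx_mul trmxK hB mulmxA.
have e1 := trs x y A hA.
rewrite hx hy mulmxBl mulmxDl -!scalemxAl in e1.
have exy := trs x y 1%:M (trmx1 _ _); rewrite !mulmx1 in exy.
rewrite exy in e1.
have key (Pyx Pxx Pyy : 'M[R]_1) :
    complex.Re a *: Pyx - complex.Im a *: Pyy = complex.Im a *: Pxx + complex.Re a *: Pyx ->
    complex.Im a * (Pxx 0 0 + Pyy 0 0) = 0.
  move/(congr1 (fun M : 'M[R]_1 => M 0 0)); rewrite !mxE => e.
  have -> : complex.Im a * (Pxx 0 0 + Pyy 0 0) =
     (complex.Im a * Pxx 0 0 + complex.Re a * Pyx 0 0) -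
     (complex.Re a * Pyx 0 0 - complex.Im a * Pyy 0 0) by ring.
  by rewrite -e subrr.
have hIm := key _ _ _ e1.
have xy0 : (x != 0) || (y != 0).
  case: (eqVneq x 0) => [x0|//]; case: (eqVneq y 0) => [y0|]; last by rewrite orbT.
  suff : v = 0 by move/eqP; rewrite (negbTE vn0).
  apply/rowP => k; rewrite mxE.
  have := congr1 (fun M : 'rV[R]_n.+1 => M 0 k) x0; have := congr1 (fun M : 'rV[R]_n.+1 => M 0 k) y0.
  rewrite !mxE; case: (v 0 k) => b1 b2 /= -> ->; by [].
have Ia0 : complex.Im a = 0.
  move/eqP: hIm; rewrite mulf_eq0 => /orP[/eqP //|].
  rewrite paddr_eq0 ?rv_dot_ge0 // => /andP[/eqP/rv_dot_eq0 x0 /eqP/rv_dot_eq0 y0].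
  by move: xy0; rewrite x0 y0 eqxx.
rewrite Ia0 scale0r subr0 in hx; rewrite Ia0 scale0r add0r in hy.
case/orP: xy0 => [nx|ny]; [exists (complex.Re a), x | exists (complex.Re a), y]; by split.
Qed.


Lemma householder (R : realFieldType) n (u : 'rV[R]_n.+1) : u *m u^T = 1%:M ->
  exists H : 'M[R]_n.+1, H *m H^T = 1%:M /\ delta_mx 0 0 *m H = u.
Proof.
move=> uu.
set e : 'rV[R]_n.+1 := delta_mx 0 0.
case: (eqVneq u e) => [->|ne]; first by exists 1%:M; split; rewrite ?trmx1 mulmx1.
pose w := u - e.
pose c := (w *m w^T) 0 0.
have ee : e *m e^T = 1%:M.
  apply/rowP => k; rewrite !mxE (bigD1 0) //= big1 ?addr0 => [|j ne0].
    by rewrite (ord1 k) !mxE !eqxx mulr1.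
  by rewrite !mxE (negbTE ne0) andbF mul0r.
have eu : e *m u^T = (u 0 0)%:M.
  apply/rowP => k; rewrite (ord1 k) !mxE (bigD1 0) //= big1 ?addr0 => [|j ne0].
    by rewrite !mxE eqxx mul1r mulr1n.
  by rewrite !mxE (negbTE ne0) andbF mul0r.
have ue : u *m e^T = (u 0 0)%:M by rewrite -[LHS]trmxK trmx_mul trmxK eu tr_scalar_mx.
have ww : w *m w^T = (2 - 2 * u 0 0)%:M.
  rewrite /w linearB /= mulmxBl !mulmxBr uu ee eu ue.
  apply/matrixP => i j; rewrite !mxE; ring.
have cE : c = 2 - 2 * u 0 0 by rewrite /c ww mxE eqxx mulr1n.
have c0 : c != 0.
  apply/negP => /eqP /rv_dot_eq0 /eqP; rewrite subr_eq0; exact/negP.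
pose k := 2 / c.
pose W := w^T *m w.
have WW : W *m W = c *: W.
  by rewrite /W mulmxA -(mulmxA w^T) ww cE mul_mx_scalar scalemxAl.
have WT : W^T = W by rewrite /W trmx_mul trmxK.
exists (1%:M - k *: W); split.
  have HT : (1%:M - k *: W)^T = 1%:M - k *: W.
    apply/matrixP => i j; have := congr1 (fun M : 'M[R]_n.+1 => M i j) WT.
    by rewrite !mxE eq_sym => ->.
  rewrite HT mulmxBl !mulmxBr mulmx1 mul1mx.
  rewrite -!scalemxAl -!scalemxAr scalerA WW scalerA.
  have -> : k * k * c = 2 * k by rewrite /k; field.
  rewrite mulmx1; apply/matrixP => i j; rewrite !mxE; ring.
rewrite mulmxBr mulmx1 -scalemxAr /W mulmxA.
have ew : e *m w^T = (u 0 0 - 1)%:M.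
  rewrite /w linearB /= mulmxBr eu ee; apply/matrixP => i j; rewrite !mxE; ring.
rewrite ew mul_scalar_mx scalerA.
have -> : k * (u 0 0 - 1) = - 1.
  rewrite /k cE; field; move: c0; rewrite cE.
  by apply: contra => /eqP h; apply/eqP; lra.
by rewrite scaleN1r opprK /w addrC subrK.
Qed.


Lemma block_conj (R : comNzRingType) m (a : R) (H A B : 'M[R]_(1 + m)) (Q' : 'M_m) (d' : 'rV_m) :
  H *m H^T = 1%:M -> H^T *m H = 1%:M -> Q' *m Q'^T = 1%:M -> B = H *m A *m H^T ->
  B = block_mx a%:M 0 0 (Q'^T *m diag_mx d' *m Q') ->
  (block_mx 1%:M 0 0 Q' *m H) *m (block_mx 1%:M 0 0 Q' *m H)^T = 1%:M /\
  A = (block_mx 1%:M 0 0 Q' *m H)^T *m diag_mx (row_mx (a%:M : 'rV_1) d') *m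
      (block_mx 1%:M 0 0 Q' *m H).
Proof.
move=> HH HH' QQ' BE0 BE; split.
  rewrite trmx_mul tr_block_mx !trmx0 trmx1 mulmxA -(mulmxA _ H) HH mulmx1.
  rewrite mulmx_block !mulmx0 !mul0mx !addr0 !add0r mulmx1 QQ'.
  by rewrite -scalar_mx_block.
rewrite trmx_mul tr_block_mx !trmx0 trmx1 diag_mx_row.
have -> : diag_mx (a%:M : 'rV[R]_1) = a%:M.
  by apply/matrixP => i j; rewrite (ord1 i) (ord1 j) !mxE.
rewrite !mulmxA -(mulmxA H^T) mulmx_block !mulmx0 !mul0mx !addr0 !add0r mul1mx.
rewrite -(mulmxA H^T) mulmx_block !mulmx0 !mul0mx !addr0 !add0r mulmx1.
rewrite -BE BE0.
by rewrite !mulmxA HH' mul1mx -mulmxA HH' mulmx1.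
Qed.

Lemma spectral (R : rcfType) n (A : 'M[R]_n) : A^T = A ->
  exists (Q : 'M[R]_n) (d : 'rV[R]_n), Q *m Q^T = 1%:M /\ A = Q^T *m diag_mx d *m Q.
Proof.
elim: n A => [|n IH] A hA.
  exists 1%:M, 0; split; first by rewrite trmx1 mulmx1.
  by apply/matrixP => i; case: i.
have [a [x [xn0 xA]]] := sym_eigvec hA.
set s := (x *m x^T) 0 0.
have s0 : 0 < s.
  rewrite lt_def rv_dot_ge0 andbT; apply/negP => /eqP/rv_dot_eq0 x0.
  by rewrite x0 eqxx in xn0.
pose u := (Num.sqrt s)^-1 *: x.
have uu : u *m u^T = 1%:M.
  rewrite /u linearZ /= -scalemxAl -scalemxAr scalerA [x *m x^T]mx11_scalar -/s.
  rewrite -invrM ?unitfE ?sqrtr_eq0 -?ltNge // -expr2 sqr_sqrtr ?ltW //.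
  by rewrite scale_scalar_mx mulVf // gt_eqF.
have uA : u *m A = a *: u by rewrite /u -scalemxAl xA !scalerA mulrC.
have [H [HH eH]] := householder uu.
have HH' : H^T *m H = 1%:M by apply: mulmx1C.
pose B := H *m A *m H^T.
have BT : B^T = B by rewrite /B !trmx_mul trmxK hA mulmxA.
have eB : (delta_mx 0 0 : 'rV[R]_n.+1) *m B = a *: delta_mx 0 0.
  by rewrite /B !mulmxA eH uA -scalemxAl -eH -mulmxA HH mulmx1.
have rowlem : forall (M : 'M[R]_n.+1) j,
    (delta_mx 0 0 : 'rV[R]_n.+1) *m M = a *: delta_mx 0 0 -> M 0 j = a * (j == 0)%:R.
  move=> M j /(congr1 (fun N : 'rV[R]_n.+1 => N 0 j)); rewrite -rowE !mxE eqxx /=.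
  by rewrite eq_sym.
have B0j j : B 0 j = a * (j == 0)%:R := rowlem B j eB.
have BE0 : B = H *m A *m H^T by [].
clearbody B.
pose B' : 'M[R]_(1 + n) := B.
have ur : ursubmx B' = 0.
  apply/matrixP => i j; rewrite !mxE (ord1 i).
  have -> : lshift n (0 : 'I_1) = 0 by apply/val_inj.
  rewrite B0j; suff -> : (rshift 1 j == 0 :> 'I_n.+1) = false by rewrite mulr0.
  by apply/negbTE; rewrite -val_eqE.
have dl : dlsubmx B' = 0 by rewrite -[B']BT -trmx_ursub ur trmx0.
have ul : ulsubmx B' = a%:M.
  apply/matrixP => i j; rewrite !mxE (ord1 i) (ord1 j).
  have -> : lshift n (0 : 'I_1) = 0 by apply/val_inj.
  by rewrite /B' B0j !eqxx mulr1 mulr1n.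
pose A' := drsubmx B'.
have A'T : A'^T = A' by rewrite /A' trmx_drsub BT.
have [Q' [d' [QQ' A'E]]] := IH A' A'T.
have BE : B' = block_mx a%:M 0 0 (Q'^T *m diag_mx d' *m Q').
  by rewrite -A'E -ul -ur -dl submxK.
have BE0' : B' = (H : 'M_(1 + n)) *m A *m H^T by [].
exists (block_mx (1%:M : 'M_1) 0 0 Q' *m (H : 'M_(1 + n))), (row_mx (a%:M : 'rV[R]_1) d').
exact: (block_conj HH HH' QQ' BE0' BE).
Qed.


Lemma charpoly_conj (R : comNzRingType) n (Q : 'M[R]_n) (d : 'rV[R]_n) :
  Q^T *m Q = 1%:M ->
  char_poly (Q^T *m diag_mx d *m Q) = \prod_(i < n) ('X - (d 0 i)%:P).
Proof.
move=> QQ.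
pose P := map_mx (@polyC R) Q.
have PP : P^T *m P = 1%:M by rewrite /P map_trmx -map_mxM QQ map_mx1.
have e : char_poly_mx (Q^T *m diag_mx d *m Q) =
         P^T *m char_poly_mx (diag_mx d) *m P.
  rewrite /char_poly_mx !map_mxM -map_trmx -/P mulmxBr mulmxBl.
  by rewrite mul_mx_scalar -scalemxAl PP scale_scalar_mx mulr1.
rewrite /char_poly e !det_mulmx mulrAC -det_mulmx PP det1 mul1r.
rewrite -/(char_poly (diag_mx d)) char_poly_trig ?diag_mx_is_trig //.
by apply: eq_bigr => i _; rewrite mxE eqxx.
Qed.

Lemma prod_rv_seq (R : comNzRingType) n (e : 'rV[R]_n) :
  \prod_(i < n) ('X - (e 0 i)%:P) = \prod_(x <- [seq e 0 i | i <- enum 'I_n]) ('X - x%:P).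
Proof. by rewrite big_map big_enum. Qed.

Lemma eigv_spec (R : rcfType) n (Q : 'M[R]_n) (d : 'rV[R]_n) :
  Q *m Q^T = 1%:M -> exists s : 'S_n, eigv (Q^T *m diag_mx d *m Q) = col_perm s d.
Proof.
move=> QQ; have QQ' : Q^T *m Q = 1%:M by apply: mulmx1C.
set M := Q^T *m diag_mx d *m Q.
have cp := charpoly_conj d QQ'; rewrite -/M in cp.
set sd := [seq d 0 i | i <- enum 'I_n].
pose t := sort (fun x y : R => y <= x) sd.
have st : size t = n by rewrite size_sort size_map size_enum_ord.
have ex : exists l, is_eigvec_sorted M l.
  exists (\row_i nth 0 t i); split.
    have pt : perm_eq t sd by rewrite /t; apply: permEl; apply: perm_sort.
    rewrite cp prod_rv_seq -/sd -(perm_big _ pt) /=.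
    rewrite (big_nth 0) st big_mkord; apply: eq_bigr => i _; by rewrite mxE.
  move=> i j ij; rewrite !mxE.
  apply: (sorted_leq_nth (leT := fun x y : R => y <= x)) => //.
  - by move=> x y z /= h1 h2; apply: le_trans h1.
  - by apply: sort_sorted => x y; apply: le_total.
  - by rewrite inE st.
  - by rewrite inE st.
have [hcp _] := @epsilon_spec _ (inhabits 0) _ ex.
rewrite -/(eigv M) in hcp.
set e := eigv M in hcp *.
have pe : perm_eq [seq e 0 i | i <- enum 'I_n] sd.
  by apply: prod_XsubC_eq; rewrite -!prod_rv_seq -hcp cp.
have : perm_eq [seq e 0 i | i <- enum 'I_n] [tuple d 0 i | i < n].
  by [].  
case/tuple_permP => s hs; exists s.
have : [seq e 0 i | i <- enum 'I_n] = [seq d 0 (s i) | i <- enum 'I_n].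
  by rewrite hs; apply: eq_map => i; rewrite tnth_mktuple.
move/eq_in_map => h; apply/rowP => i; rewrite mxE /=.
by rewrite h // mem_enum.
Qed.


Lemma fin_choice (I A : Type) (P : I -> A -> Prop) (a0 : A) :
  (forall i, exists a, P i a) -> exists g : I -> A, forall i, P i (g i).
Proof.
move=> h; exists (fun i => epsilon (inhabits a0) (P i)) => i.
exact: epsilon_spec (h i).
Qed.

Lemma pair_sum (R : pzRingType) (U V : lmodType R) (I : finType) (w : I -> R)
  (x : I -> U) (y : I -> V) :
  \sum_i w i *: ((x i, y i) : (U * V)%type) = (\sum_i w i *: x i, \sum_i w i *: y i).
Proof.
have -> : \sum_i w i *: ((x i, y i) : (U * V)%type) =
  ((\sum_i w i *: ((x i, y i) : (U * V)%type)).1, (\sum_i w i *: ((x i, y i) : (U * V)%type)).2).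
  by case: (\sum_i _).
by rewrite fst_sum snd_sum.
Qed.

Lemma diag_birk (R : rcfType) p (Q U : 'M[R]_p) (e : 'rV[R]_p) :
  (0 < p)%N -> Q *m Q^T = 1%:M -> U *m U^T = 1%:M ->
  exists mu : 'S_p -> R, (forall s, 0 <= mu s) /\ \sum_s mu s = 1 /\
   forall i, (Q *m (U^T *m diag_mx e *m U) *m Q^T) i i = \sum_s mu s * e 0 (s i).
Proof.
move=> hp QQ UU.
have QQ' : Q^T *m Q = 1%:M by apply: mulmx1C.
have UU' : U^T *m U = 1%:M by apply: mulmx1C.
pose V := Q *m U^T.
have VV : V *m V^T = 1%:M by rewrite /V trmx_mul trmxK mulmxA -(mulmxA Q) UU' mulmx1 QQ.
have VV' : V^T *m V = 1%:M by apply: mulmx1C.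
pose D := \matrix_(i, j) (V i j ^+ 2).
have D0 : forall i j, 0 <= D i j by move=> i j; rewrite mxE sqr_ge0.
have Dr : forall i, \sum_j D i j = 1.
  move=> i; have := congr1 (fun M : 'M[R]_p => M i i) VV; rewrite !mxE eqxx mulr1n => <-.
  by apply: eq_bigr => j _; rewrite !mxE expr2.
have Dc : forall j, \sum_i D i j = 1.
  move=> j; have := congr1 (fun M : 'M[R]_p => M j j) VV'; rewrite !mxE eqxx mulr1n => <-.
  by apply: eq_bigr => i _; rewrite !mxE expr2.
have [mu [mu0 hmu]] := birkhoff D0 Dr Dc.
exists mu; split => //; split.
  have i0 : 'I_p := Ordinal hp.
  rewrite -(Dr i0) (eq_bigr _ (fun j _ => hmu i0 j)) exchange_big /=.
  apply: eq_bigr => s _; rewrite -mulr_sumr (bigD1 (s i0)) //= eqxx big1 ?addr0 ?mulr1 //.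
  by move=> j ne; rewrite eq_sym (negbTE ne).
move=> i.
have -> : Q *m (U^T *m diag_mx e *m U) *m Q^T = V *m diag_mx e *m V^T.
  by rewrite /V trmx_mul trmxK !mulmxA.
rewrite mul_mx_diag.
rewrite !mxE.
transitivity (\sum_j D i j * e 0 j).
  by apply: eq_bigr => j _; rewrite !mxE expr2 mulrAC.
rewrite (eq_bigr _ (fun j _ => congr1 (fun x => x * e 0 j) (hmu i j))).
under eq_bigr do rewrite mulr_suml.
rewrite exchange_big /=; apply: eq_bigr => s _.
rewrite (bigD1 (s i)) //= eqxx mulr1 big1 ?addr0 // => j ne.
by rewrite eq_sym (negbTE ne) mulr0 mul0r.
Qed.


Theorem mainTheorem10 (R : rcfType) (p q r : nat)
  (f : 'I_r -> 'rV[R]_p -> 'rV[R]_q -> R)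
  (hp : (0 < p)%N)
  (hperm : forall (i : 'I_r) (s : 'S_p) (x : 'rV[R]_p) (z : 'rV[R]_q),
             f i (col_perm s x) z = f i x z) :
  forall (M : 'M[R]_p) (z : 'rV[R]_q),
    conv (Sbar f) (M, z) <-> (M^T = M /\ conv (Sset f) (eigv M, z)).
Proof.
move=> M z; split.
- case=> n [w [a [w0 [w1 [aS Ma]]]]].
  have aE : forall k, a k = ((a k).1, (a k).2) by move=> k; case: (a k).
  have eMa : M = \sum_k w k *: (a k).1 /\ z = \sum_k w k *: (a k).2.
    have := Ma; rewrite (eq_bigr _ (fun k _ => congr1 (fun y => w k *: y) (aE k))).
    by rewrite pair_sum => -[-> ->].
  case: eMa => Me ze.
  have symk : forall k, ((a k).1)^T = (a k).1 by move=> k; case: (aS k).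
  have MT : M^T = M.
    by rewrite Me linear_sum; apply: eq_bigr => k _; rewrite linearZ /= symk.
  split => //.
  have [Q [d [QQ Md]]] := spectral MT.
  have [s0 hs0] := eigv_spec d QQ.
  have [UE hUE] := @fin_choice 'I_n _ (fun k ue => ue.1 *m ue.1^T = 1%:M /\
       (a k).1 = ue.1^T *m diag_mx ue.2 *m ue.1) (0, 0)
     (fun k => let: ex_intro Q' (ex_intro d' h) := spectral (symk k) in ex_intro _ (Q', d') h).
  have [MU hMU] := @fin_choice 'I_n _ (fun k (mu : 'S_p -> R) => (forall s, 0 <= mu s) /\ \sum_s mu s = 1 /\
      forall i, (Q *m ((UE k).1^T *m diag_mx (UE k).2 *m (UE k).1) *m Q^T) i i =
         \sum_(s : 'S_p) mu s * (UE k).2 0 (s i)) (fun _ => 0)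
     (fun k => diag_birk (UE k).2 hp QQ (hUE k).1).
  pose W (u : 'I_n * 'S_p) := w u.1 * MU u.1 u.2.
  pose P (u : 'I_n * 'S_p) : ('rV[R]_p * 'rV[R]_q)%type :=
    (col_perm s0 (col_perm u.2 (UE u.1).2), (a u.1).2).
  have -> : (eigv M, z) = \sum_u W u *: P u.
    rewrite pair_sum; congr pair.
      apply/rowP => i; rewrite {1}Md hs0 summxE mxE.
      have dE : forall j, d 0 j = (Q *m M *m Q^T) j j.
        move=> j; rewrite Md !mulmxA QQ mul1mx -mulmxA QQ mulmx1 mxE eqxx //.
      rewrite dE Me mulmx_sumr mulmx_suml summxE -(pair_bigA _ (fun k s => (W (k, s) *: col_perm s0 (col_perm s (UE k).2)) 0 i)) /=.
      apply: eq_bigr => k _.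
      rewrite -scalemxAr -scalemxAl mxE (hUE k).2 (hMU k).2.2 mulr_sumr.
      by apply: eq_bigr => s _; rewrite /W /= !mxE mulrA.
    rewrite ze -(pair_bigA _ (fun k s => W (k, s) *: (a k).2)) /=; apply: eq_bigr => k _.
    by rewrite -scaler_suml /W /= -mulr_sumr (hMU k).2.1 mulr1.
  apply: conv_fin.
  - by move=> u; apply: mulr_ge0; [apply: w0 | apply: (hMU u.1).1].
  - rewrite -(pair_bigA _ (fun k s => W (k, s))) /= -w1; apply: eq_bigr => k _.
    by rewrite /W /= -mulr_sumr (hMU k).2.1 mulr1.
  - move=> [k s] i; rewrite /P /= !hperm.
    have [t ht] := eigv_spec (UE k).2 (hUE k).1.
    rewrite -(hUE k).2 in ht.
    by rewrite -(hperm i t) -ht; case: (aS k) => _; apply.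
- case=> MT [n [w [a [w0 [w1 [aS Ma]]]]]].
  have aE : forall k, a k = ((a k).1, (a k).2) by move=> k; case: (a k).
  have eMa : eigv M = \sum_k w k *: (a k).1 /\ z = \sum_k w k *: (a k).2.
    have := Ma; rewrite (eq_bigr _ (fun k _ => congr1 (fun y => w k *: y) (aE k))).
    by rewrite pair_sum => -[-> ->].
  case: eMa => Me ze.
  have [Q [d [QQ Md]]] := spectral MT.
  have [s0 hs0] := eigv_spec d QQ; rewrite -Md in hs0.
  have dE : d = col_perm s0^-1 (eigv M) by rewrite hs0 -col_permM mulVg col_perm1.
  pose y k := col_perm s0^-1 (a k).1.
  pose Mk k := Q^T *m diag_mx (y k) *m Q.
  have -> : (M, z) = \sum_k w k *: ((Mk k, (a k).2) : ('M[R]_p * 'rV[R]_q)%type).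
    rewrite pair_sum; congr pair; last exact: ze.
    have cps : col_perm s0^-1 (eigv M) = \sum_k w k *: y k.
      by apply/rowP => i; rewrite Me !mxE !summxE; apply: eq_bigr => k _; rewrite !mxE.
    rewrite {1}Md dE cps linear_sum mulmx_sumr mulmx_suml.
    by apply: eq_bigr => k _; rewrite linearZ /= -scalemxAr -scalemxAl.
  apply: conv_fin => // k; split.
    by rewrite /Mk !trmx_mul trmxK tr_diag_mx mulmxA.
  move=> i /=; have [t ht] := eigv_spec (y k) QQ; rewrite -/(Mk k) in ht.
  by rewrite ht !hperm; apply: aS.
Qed.
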